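(* Let $(R_i)$ and $(S_i)$ be sequences of real numbers all $\ge1$. Let $\nu:\mathbb N^2\to[1,\infty)$ be the unique multiplicative map (i.e. $\nu(xy)=\nu(x)\nu(y)$) with $\nu(1,1)=1$, $\nu(p_i,1)=R_i$ and $\nu(1,p_i)=S_i$ for all $i\in\mathbb N$. Then $\nu$ is an almost monotone weight on $\mathbb N^2$ and $$\Delta(\ell^1(\mathbb N^2,\nu))=\prod_{i=1}^\infty\overline{B(0,R_i)}\times\prod_{i=1}^\infty\overline{B(0,S_i)}.$$
   Context: $p_1<p_2<\cdots$ are the primes; $\overline{B(0,r)}=\{|z|\le r\}$. A weight on $\mathbb N^2$ (coordinatewise multiplication) is $\omega:\mathbb N^2\to[1,\infty)$ with $\omega(xy)\le\omega(x)\omega(y)$; admissible if $\lim_n\omega(l^n,k^n)^{1/n}=1$ for all $(l,k)$; almost monotone if either it is admissible, or there is $K>0$ such that $\omega(m_1,n_1)\le K\omega(m_2,n_2)$ whenever either $m_1\mid m_2$ or $n_1\mid n_2$. $\ell^1(\mathbb N^2,\nu)$ is the weighted Dirichlet-convolution algebra $\{a:\sum|a(m,n)|\nu(m,n)<\infty\}$; its Gel'fand space is identified with the $\nu$-bounded semicharacters (nonzero multiplicative $\chi$ with $|\chi|\le\nu$), each identified with the pair of sequences $((\chi(p_i,1))_i,(\chi(1,p_i))_i)$. *)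

(* Defs.v *)
From HB Require Import structures.
From mathcomp Require Import all_boot all_order all_algebra.
From mathcomp Require Import all_classical all_reals all_analysis.
From mathcomp Require Import complex.
Set Implicit Arguments. Unset Strict Implicit. Unset Printing Implicit Defensive.
Import Order.TTheory GRing.Theory Num.Theory.
Local Open Scope ring_scope.
Import numFieldNormedType.Exports.
Local Open Scope classical_set_scope.

(* The i-th prime, indexed from 0: nth_prime 0 = 2 = p_1, nth_prime 1 = 3 = p_2, ...
   (so nth_prime i is p_{i+1} in the paper's notation).
   next_prime n is the least prime strictly greater than n. *)
Lemma next_prime_ex (n : nat) : exists q, (n < q)%N && prime q.
Proof. by case: (prime_above n) => q Hq Pq; exists q; rewrite Hq Pq. Qed.

Definition next_prime (n : nat) : nat := ex_minn (next_prime_ex n).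

Fixpoint nth_prime (i : nat) : nat :=
  match i with
  | 0 => 2
  | i'.+1 => next_prime (nth_prime i')
  end.

(* The multiplicative semigroup N^2 = {(m,n) | m,n >= 1} with coordinatewise
   multiplication is represented by pairs of arguments m n : nat with 0 < m, 0 < n;
   functions on N^2 are functions nat -> nat -> _ whose values at 0 are irrelevant. *)

Definition weight (R : realType) (w : nat -> nat -> R) : Prop :=
  (forall m n, (0 < m)%N -> (0 < n)%N -> 1 <= w m n) /\
  (forall m1 n1 m2 n2, (0 < m1)%N -> (0 < n1)%N -> (0 < m2)%N -> (0 < n2)%N ->
     w (m1 * m2)%N (n1 * n2)%N <= w m1 n1 * w m2 n2).

Definition admissible (R : realType) (w : nat -> nat -> R) : Prop :=
  forall l k, (0 < l)%N -> (0 < k)%N ->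
    (fun n : nat => w (l ^ n)%N (k ^ n)%N `^ (n%:R)^-1) @ \oo --> (1 : R).

Definition almost_monotone (R : realType) (w : nat -> nat -> R) : Prop :=
  admissible w \/
  exists K : R, 0 < K /\
    forall m1 n1 m2 n2, (0 < m1)%N -> (0 < n1)%N -> (0 < m2)%N -> (0 < n2)%N ->
      (m1 %| m2)%N -> (n1 %| n2)%N -> w m1 n1 <= K * w m2 n2.

Definition bounded_semicharacter (R : realType) (nu : nat -> nat -> R)
    (chi : nat -> nat -> R[i]) : Prop :=
  (exists m n, [/\ (0 < m)%N, (0 < n)%N & chi m n != 0]) /\
  (forall m1 n1 m2 n2, (0 < m1)%N -> (0 < n1)%N -> (0 < m2)%N -> (0 < n2)%N ->
     chi (m1 * m2)%N (n1 * n2)%N = chi m1 n1 * chi m2 n2) /\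
  (forall m n, (0 < m)%N -> (0 < n)%N -> ComplexField.Normc.normc (chi m n) <= nu m n).

(* The Gel'fand space Delta(l^1(N^2, nu)), identified (via
   chi |-> ((chi(p_i,1))_i, (chi(1,p_i))_i)) with a set of pairs of sequences. *)
Definition gelfand_space (R : realType) (nu : nat -> nat -> R)
    : set ((nat -> R[i]) * (nat -> R[i])) :=
  [set ab | exists chi, bounded_semicharacter nu chi /\
      (forall i, chi (nth_prime i) 1%N = ab.1 i /\ chi 1%N (nth_prime i) = ab.2 i)].

(* Main.v *)
Require Import Defs.
From HB Require Import structures.
From mathcomp Require Import all_boot all_order all_algebra.
From mathcomp Require Import all_classical all_reals all_analysis.
From mathcomp Require Import complex.
Import Order.TTheory GRing.Theory Num.Theory.
Set Implicit Arguments. Unset Strict Implicit. Unset Printing Implicit Defensive.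

Lemma next_primeP n : [/\ (n < next_prime n)%N, prime (next_prime n) &
  forall q, (n < q)%N -> prime q -> (next_prime n <= q)%N].
Proof.
rewrite /next_prime; case: ex_minnP => q /andP[h1 h2] hm; split => // r h3 h4.
by apply: hm; rewrite h3 h4.
Qed.

Lemma nth_prime_prime i : prime (nth_prime i).
Proof. by case: i => [|i] //=; case: (next_primeP (nth_prime i)). Qed.

Lemma nth_prime_lt i : (nth_prime i < nth_prime i.+1)%N.
Proof. by rewrite /=; case: (next_primeP (nth_prime i)). Qed.

Lemma nth_prime_ge i : (i < nth_prime i)%N.
Proof. elim: i => [//|i IH]; exact: leq_ltn_trans IH (nth_prime_lt i). Qed.

Lemma nth_prime_inj : injective nth_prime.
Proof.
apply: incn_inj; apply: leq_mono; apply: homo_ltn; [exact: ltn_trans | exact: nth_prime_lt].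
Qed.

Lemma nth_prime_surj_aux i p : prime p -> (p <= nth_prime i)%N -> exists j, nth_prime j = p.
Proof.
elim: i p => [|i IH] p pp hp.
  by exists 0%N; apply/eqP; rewrite eqn_leq hp prime_gt1.
case: (leqP p (nth_prime i)) => h.
  exact: (IH p pp h).
exists i.+1; apply/eqP; rewrite eqn_leq hp /=.
have [_ _ H] := next_primeP (nth_prime i).
by rewrite andbT; exact: H.
Qed.

Lemma nth_prime_surj p : prime p -> exists2 j, (j < p)%N & nth_prime j = p.
Proof.
move=> pp; have [j hj] := nth_prime_surj_aux (i:=p) pp (ltnW (nth_prime_ge p)).
by exists j => //; rewrite -hj nth_prime_ge.
Qed.


Local Open Scope ring_scope.

Definition E (T : comRingType) (f : nat -> T) (m : nat) : T :=
  \prod_(0 <= p < m.+1 | prime p) f p ^+ logn p m.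

Lemma E_ext (T : comRingType) (f : nat -> T) m N : (0 < m)%N -> (m < N)%N ->
  E f m = \prod_(0 <= p < N | prime p) f p ^+ logn p m.
Proof.
move=> m0 mN; rewrite /E (big_cat_nat (n:=m.+1) (leq0n m.+1) mN) /=.
rewrite [X in _ = _ * X]big1_seq ?mulr1 // => p /andP[pp]; rewrite mem_index_iota => /andP[hp _].
case: (posnP (logn p m)) => [->//|]; rewrite logn_gt0 mem_primes => /and3P[_ _ /dvdn_leq].
by move=> /(_ m0); rewrite leqNgt hp.
Qed.

Lemma E_mul (T : comRingType) (f : nat -> T) m1 m2 : (0 < m1)%N -> (0 < m2)%N ->
  E f (m1 * m2) = E f m1 * E f m2.
Proof.
move=> h1 h2; rewrite (@E_ext _ f m1 (m1 * m2).+1 h1) ?ltnS ?leq_pmulr //.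
rewrite (@E_ext _ f m2 (m1 * m2).+1 h2) ?ltnS ?leq_pmull // /E -big_split /=.
by apply: eq_bigr => p _; rewrite lognM // exprD.
Qed.

Lemma E_1 (T : comRingType) (f : nat -> T) : E f 1 = 1.
Proof. by rewrite /E big1 // => p _; rewrite logn1 expr0. Qed.

Lemma E_prime (T : comRingType) (f : nat -> T) q : prime q -> E f q = f q.
Proof.
move=> pq; rewrite /E big_mkcond big_nat_recr //= pq logn_prime // eqxx expr1.
rewrite big1_seq ?mul1r // => p; rewrite mem_index_iota => /andP[_ hp]; case: ifP => // _.
by rewrite logn_prime // (ltn_eqF hp) expr0.
Qed.

Lemma mult_E (T : comRingType) (g : nat -> T) : g 1%N = 1 ->
  (forall m1 m2, (0 < m1)%N -> (0 < m2)%N -> g (m1 * m2)%N = g m1 * g m2) ->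
  forall m, (0 < m)%N -> g m = E g m.
Proof.
move=> g1 gM m; elim: m {-2}m (leqnn m) => [|n IH] m hm m0.
  by move: m0 hm; case: m.
case: (ltngtP m 1) => [|m1|->]; first by rewrite ltnS leqn0 -(prednK m0).
  have pp := pdiv_prime m1; have pd := pdiv_dvd m.
  have p0 := prime_gt0 pp; have q0 : (0 < m %/ pdiv m)%N by rewrite divn_gt0 // dvdn_leq.
  rewrite -(divnK pd) gM // E_mul // (E_prime g pp) -(IH (m %/ pdiv m)%N) //.
  by rewrite -ltnS (leq_trans _ hm) // ltn_Pdiv // prime_gt1.
by rewrite E_1 g1.
Qed.

Definition idx (p : nat) : nat := index p (mkseq nth_prime p).

Lemma idxP p : prime p -> nth_prime (idx p) = p.
Proof.
move=> pp; have [j jp hj] := nth_prime_surj pp.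
have hin : p \in mkseq nth_prime p by apply/mapP; exists j; rewrite // mem_iota.
have hi : (idx p < p)%N by move: hin; rewrite -index_mem size_mkseq.
by move: (nth_index 0%N hin); rewrite nth_mkseq.
Qed.

Lemma idx_nth i : idx (nth_prime i) = i.
Proof. by apply: nth_prime_inj; rewrite idxP // nth_prime_prime. Qed.

Lemma E_ge1 (R : realType) (f : nat -> R) m : (forall p, prime p -> 1 <= f p) -> 1 <= E f m.
Proof.
move=> hf; rewrite /E; apply: (big_ind (fun x => 1 <= x)) => //.
  by move=> x y; apply: mulr_ege1.
by move=> p pp; apply: exprn_ege1; apply: hf.
Qed.

Lemma E_le (R : realType) (f g : nat -> R) m : (forall p, prime p -> 0 <= f p <= g p) ->
  E f m <= E g m.
Proof.
move=> hf; rewrite /E; apply: ler_prod => p pp; have /andP[h1 h2] := hf p pp.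
by rewrite exprn_ge0 //= lerXn2r // ?nnegrE // (le_trans h1 h2).
Qed.

Lemma normc_ge0 (R : realType) (x : R[i]) : 0 <= ComplexField.Normc.normc x.
Proof. by case: x => a b; apply: sqrtr_ge0. Qed.

Lemma normcX (R : realType) (x : R[i]) k :
  ComplexField.Normc.normc (x ^+ k) = ComplexField.Normc.normc x ^+ k.
Proof.
elim: k => [|k IH]; first by rewrite !expr0 ComplexField.Normc.normc1.
by rewrite !exprS ComplexField.Normc.normcM IH.
Qed.

Lemma normc_E (R : realType) (f : nat -> R[i]) m :
  ComplexField.Normc.normc (E f m) = E (fun p => ComplexField.Normc.normc (f p)) m.
Proof.
rewrite /E (big_morph _ (@ComplexField.Normc.normcM R) (@ComplexField.Normc.normc1 R)).
by apply: eq_bigr => p _; rewrite normcX.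
Qed.

Local Open Scope classical_set_scope.

Theorem mainTheorem9 (R : realType) (Rs Ss : nat -> R) (nu : nat -> nat -> R)
  (hR : forall i, 1 <= Rs i) (hS : forall i, 1 <= Ss i)
  (hmul : forall m1 n1 m2 n2, (0 < m1)%N -> (0 < n1)%N -> (0 < m2)%N -> (0 < n2)%N ->
     nu (m1 * m2)%N (n1 * n2)%N = nu m1 n1 * nu m2 n2)
  (h11 : nu 1%N 1%N = 1)
  (hp1 : forall i, nu (nth_prime i) 1%N = Rs i)
  (h1p : forall i, nu 1%N (nth_prime i) = Ss i) :
  (weight nu /\ almost_monotone nu) /\
  gelfand_space nu =
    [set ab | forall i, ComplexField.Normc.normc (ab.1 i) <= Rs i /\ ComplexField.Normc.normc (ab.2 i) <= Ss i].
Proof.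
have hsplit m n : (0 < m)%N -> (0 < n)%N -> nu m n = nu m 1%N * nu 1%N n.
  by move=> m0 n0; rewrite -hmul // muln1 mul1n.
have nu1E m : (0 < m)%N -> nu m 1%N = E (fun p => nu p 1%N) m.
  apply: (mult_E (g := fun m => nu m 1%N)) => // m1 m2 h1 h2.
  by rewrite -hmul.
have nu2E m : (0 < m)%N -> nu 1%N m = E (fun p => nu 1%N p) m.
  apply: (mult_E (g := fun m => nu 1%N m)) => // m1 m2 h1 h2.
  by rewrite -hmul.
have nup p : prime p -> nu p 1%N = Rs (idx p) /\ nu 1%N p = Ss (idx p).
  by move=> pp; split; [rewrite -{1}(idxP pp) hp1 | rewrite -{1}(idxP pp) h1p].
have nuge1 m n : (0 < m)%N -> (0 < n)%N -> 1 <= nu m n.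
  move=> m0 n0; rewrite hsplit // nu1E // nu2E //.
  by apply: mulr_ege1; apply: E_ge1 => p pp; have [h1 h2] := nup p pp; rewrite ?h1 ?h2.
split; first split.
- split => //; move=> m1 n1 m2 n2 *; rewrite hmul //.
- right; exists 1; split => // m1 n1 m2 n2 h1 h2 h3 h4 d1 d2.
  have q1 : (0 < m2 %/ m1)%N by rewrite divn_gt0 // dvdn_leq.
  have q2 : (0 < n2 %/ n1)%N by rewrite divn_gt0 // dvdn_leq.
  rewrite -(divnK d1) -(divnK d2) hmul // mul1r ler_peMl //.
    exact: le_trans (nuge1 _ _ h1 h2).
  exact: nuge1.
apply/seteqP; split => [[a b] /= [chi [[_ [_ hb]] hc]] i | [a b] /= hab].
  have [e1 e2] := hc i; rewrite /= in e1 e2; rewrite -e1 -e2 -hp1 -h1p; have p0 := prime_gt0 (nth_prime_prime i).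
  by split; apply: hb.
exists (fun m n => E (fun p => a (idx p)) m * E (fun p => b (idx p)) n).
split; last first.
  by move=> i /=; rewrite !(E_prime _ (nth_prime_prime i)) !E_1 !idx_nth mulr1 mul1r.
split; first by exists 1%N, 1%N; rewrite !E_1 mulr1 oner_neq0.
split.
  by move=> m1 n1 m2 n2 h1 h2 h3 h4; rewrite !E_mul // mulrACA.
move=> m n m0 n0; rewrite ComplexField.Normc.normcM !normc_E hsplit // nu1E // nu2E //.
apply: ler_pM; rewrite ?normc_ge0 //.
- by rewrite /E; apply: prodr_ge0 => p _; apply/exprn_ge0/normc_ge0.
- by rewrite /E; apply: prodr_ge0 => p _; apply/exprn_ge0/normc_ge0.
- apply: E_le => p pp; rewrite normc_ge0 /=; have [-> _] := nup p pp; exact: (hab (idx p)).1.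
- apply: E_le => p pp; rewrite normc_ge0 /=; have [_ ->] := nup p pp; exact: (hab (idx p)).2.
Qed.
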